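(* Let $K$ be a local field whose residue field has size $q$. Every congruence class in $T_\infty(K)/I_q(K)$ has a unique $q$-simplified representative, and if $f\equiv g\bmod I_q(K)$ with $g$ $q$-simplified, then $|f\bmod I_q(K)|_{\mathrm{res}}=|g|$.
   Context: A local field is a field complete with respect to a nontrivial discrete nonarchimedean absolute value with finite residue field. $T_\infty(K)=K\langle X_1,X_2,\dots\rangle$ is the set of formal power series $f=\sum_i a_i\underline X^i$ in countably many indeterminates (indices $i$ ranging over finitely supported sequences of nonnegative integers, $\underline X^i$ the corresponding monomial) such that $a_i\to0$, i.e. for every $\varepsilon>0$ only finitely many $|a_i|\ge\varepsilon$; it is a $K$-algebra normed by $|f|=\sup_i|a_i|$. $I_q(K)$ is the closure of the ideal generated by all $X_j^q-X_j$. For a closed ideal $I$, $|f\bmod I|_{\mathrm{res}}=\inf_{h\in I}|f+h|$. A series is $q$-simplified if in each monomial with nonzero coefficient every exponent is at most $q-1$. *)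

(* Defs.v *)
From HB Require Import structures.
From mathcomp Require Import all_boot all_order all_algebra.
From mathcomp Require Import boolp classical_sets reals.
From Stdlib Require List.
Set Implicit Arguments.
Unset Strict Implicit.
Unset Printing Implicit Defensive.
Import Order.TTheory GRing.Theory Num.Theory.
Local Open Scope ring_scope.
Local Open Scope classical_set_scope.

Section Defs.
Variables (R : realType) (K : fieldType) (absv : K -> R).

Definition nonarch_absval : Prop :=
  [/\ forall x, 0 <= absv x,
      forall x, absv x = 0 <-> x = 0,
      forall x y, absv (x * y) = absv x * absv y &
      forall x y, absv (x + y) <= Num.max (absv x) (absv y)].

Definition nontrivial_discrete : Prop :=
  exists pi : K, 0 < absv pi < 1 /\
    forall x, x != 0 -> exists n : int, absv x = absv pi ^ n.

Definition complete_absval : Prop :=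
  forall u : nat -> K,
    (forall eps : R, 0 < eps -> exists N, forall m n, (N <= m)%N -> (N <= n)%N ->
        absv (u m - u n) < eps) ->
    exists l : K, forall eps : R, 0 < eps -> exists N, forall n, (N <= n)%N ->
        absv (u n - l) < eps.

(** The residue field O/m (O = {|x| <= 1}, m = {|x| < 1}) has exactly q
    elements: there is a list of q elements of O, pairwise distinct mod m,
    meeting every class of O mod m. *)
Definition residue_size (q : nat) : Prop :=
  exists s : seq K,
    [/\ size s = q,
        forall i, (i < q)%N -> absv (nth 0 s i) <= 1,
        forall i j, (i < q)%N -> (j < q)%N -> absv (nth 0 s i - nth 0 s j) < 1 -> i = j &
        forall x, absv x <= 1 -> exists2 i, (i < q)%N & absv (x - nth 0 s i) < 1].

Definition is_local_field (q : nat) : Prop :=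
  [/\ nonarch_absval, nontrivial_discrete, complete_absval & residue_size q].
End Defs.

(** Monomials in X_0, X_1, ...: finitely supported exponent sequences. *)
Record mon := Mon { expo : nat -> nat ;
                    expo_fin : exists N, forall j, (N <= j)%N -> expo j = 0%N }.

Lemma decr_fin (k : mon) (j m : nat) :
  exists N, forall l, (N <= l)%N ->
    (fun l => if l == j then (expo k l - m)%N else expo k l) l = 0%N.
Proof.
case: k => e [N HN] /=; exists N => l Hl.
by case: eqP => _; rewrite HN.
Qed.

Definition decr (k : mon) (j m : nat) : mon :=
  Mon (decr_fin k j m).

Section Series.
Variables (R : realType) (K : fieldType) (absv : K -> R).

(** formal power series: coefficient families indexed by monomials *)
Definition ser := mon -> K.

Definition in_Tinf (f : ser) : Prop :=
  forall eps : R, 0 < eps -> exists l : seq mon,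
    forall i, eps <= absv (f i) -> List.In i l.

Definition tnorm (f : ser) : R := sup (range (fun i => absv (f i))).

Definition mulXpow (j m : nat) (h : ser) : ser :=
  fun k => if (m <= expo k j)%N then h (decr k j m) else 0.

Definition gen_term (q j : nat) (h : ser) : ser :=
  fun k => mulXpow j q h k - mulXpow j 1 h k.

Definition in_gen_ideal (q : nat) (g : ser) : Prop :=
  exists l : seq (nat * ser),
    (forall p, List.In p l -> in_Tinf p.2) /\
    g = fun k => \sum_(p <- l) gen_term q p.1 p.2 k.

Definition in_Iq (q : nat) (f : ser) : Prop :=
  in_Tinf f /\
  forall eps : R, 0 < eps -> exists g, in_gen_ideal q g /\
    tnorm (fun k => f k - g k) < eps.

Definition q_simplified (q : nat) (g : ser) : Prop :=
  forall i, g i != 0 -> forall j, (expo i j <= q.-1)%N.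

Definition res_norm (q : nat) (f : ser) : R :=
  inf [set tnorm (fun k => f k + h k) | h in in_Iq q].
End Series.

(* Main.v *)
From HB Require Import structures.
Require Import Defs.
From mathcomp Require Import all_boot all_order all_algebra.
From mathcomp Require Import boolp classical_sets reals.
From Stdlib Require List.
From mathcomp Require Import ring lra zify.
Import Order.TTheory GRing.Theory Num.Theory.
Local Open Scope ring_scope.
Set Implicit Arguments.
Unset Strict Implicit.
Unset Printing Implicit Defensive.


HB.instance Definition _ := gen_eqMixin mon.
HB.instance Definition _ := gen_choiceMixin mon.

Lemma InP (T : eqType) (x : T) (s : seq T) : List.In x s <-> x \in s.
Proof.
elim: s => [|a s IH] /=; first by split.
rewrite in_cons; split.
  by case=> [->|/IH ->]; rewrite ?eqxx ?orbT.
by case/orP=> [/eqP ->|/IH]; [left|right].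
Qed.

Lemma monP (a b : mon) : (forall l, expo a l = expo b l) -> a = b.
Proof.
case: a b => ea pa [eb pb] /= H.
have E : ea = eb by apply: funext.
subst eb. by rewrite (Prop_irrelevance pa pb).
Qed.

Section Abs.
Variables (R : realType) (K : fieldType) (absv : K -> R).
Hypothesis habs : nonarch_absval absv.

Lemma abs_ge0 x : 0 <= absv x. Proof. by case: habs. Qed.
Lemma abs0 : absv 0 = 0. Proof. by case: habs => _ H _ _; apply H. Qed.
Lemma abs_eq0 x : absv x = 0 -> x = 0. Proof. by case: habs => _ H _ _; apply H. Qed.
Lemma absM x y : absv (x * y) = absv x * absv y. Proof. by case: habs. Qed.
Lemma absD x y : absv (x + y) <= Num.max (absv x) (absv y). Proof. by case: habs. Qed.

Lemma abs1 : absv 1 = 1.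
Proof.
have h1 : absv 1 != 0 by apply/eqP => /abs_eq0 /eqP; rewrite oner_eq0.
have := absM 1 1; rewrite mulr1 => /eqP; rewrite -subr_eq0.
rewrite -{1}(mulr1 (absv 1)) -mulrBr mulf_eq0 (negbTE h1) /= subr_eq0.
by move/eqP.
Qed.

Lemma absN x : absv (- x) = absv x.
Proof.
have hm : absv (-1) = 1.
  have h := absM (-1) (-1); rewrite mulrNN mulr1 abs1 in h.
  have g0 := abs_ge0 (-1).
  have : (absv (-1) - 1) * (absv (-1) + 1) = 0.
    by rewrite mulrDr mulrBl mulr1 mul1r -h; ring.
  move/eqP; rewrite mulf_eq0 => /orP[]; first by rewrite subr_eq0 => /eqP.
  move=> /eqP H; exfalso; have : 0 < absv (-1) + 1 by apply: ltr_wpDl.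
  by rewrite H ltxx.
by rewrite -mulN1r absM hm mul1r.
Qed.

Lemma absB x y : absv (x - y) = absv (y - x).
Proof. by rewrite -absN opprB. Qed.

Lemma absD_le x y c : absv x <= c -> absv y <= c -> absv (x + y) <= c.
Proof. move=> hx hy; apply: le_trans (absD x y) _; by rewrite ge_max hx hy. Qed.

Lemma absD_lt x y c : absv x < c -> absv y < c -> absv (x + y) < c.
Proof. move=> hx hy; apply: le_lt_trans (absD x y) _; by rewrite gt_max hx hy. Qed.

Lemma absB_lt x y c : absv x < c -> absv y < c -> absv (x - y) < c.
Proof. by move=> hx hy; apply: absD_lt => //; rewrite absN. Qed.

Lemma absB_le x y c : absv x <= c -> absv y <= c -> absv (x - y) <= c.
Proof. by move=> hx hy; apply: (absD_le hx); rewrite absN. Qed.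

Lemma sum_le (I : Type) (s : seq I) (P : pred I) (F : I -> K) c :
  0 <= c -> (forall i, P i -> absv (F i) <= c) -> absv (\sum_(i <- s | P i) F i) <= c.
Proof.
move=> c0 H; apply: (big_ind (fun x => absv x <= c)); first by rewrite abs0.
  by move=> x y; apply: absD_le.
exact: H.
Qed.

Lemma sum_lt (I : Type) (s : seq I) (P : pred I) (F : I -> K) c :
  0 < c -> (forall i, P i -> absv (F i) < c) -> absv (\sum_(i <- s | P i) F i) < c.
Proof.
move=> c0 H; apply: (big_ind (fun x => absv x < c)); first by rewrite abs0.
  by move=> x y; apply: absD_lt.
exact: H.
Qed.

Lemma sum_nz (L : seq mon) (F : mon -> K) :
  \sum_(k <- L) F k = \sum_(k <- filter (fun k => F k != 0) L) F k.
Proof.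
rewrite big_filter [RHS]big_mkcond; apply: eq_bigr => k _.
by case: (boolP (F k != 0)) => // /negPn /eqP ->.
Qed.

Lemma sum_supp (L1 L2 : seq mon) (F : mon -> K) :
  uniq L1 -> uniq L2 ->
  (forall k, F k != 0 -> k \in L1) -> (forall k, F k != 0 -> k \in L2) ->
  \sum_(k <- L1) F k = \sum_(k <- L2) F k.
Proof.
move=> u1 u2 h1 h2.
rewrite sum_nz [RHS]sum_nz; apply: perm_big; apply: uniq_perm; rewrite ?filter_uniq //.
move=> k; rewrite !mem_filter; case: (boolP (F k != 0)) => hk //=.
by rewrite (h1 _ hk) (h2 _ hk).
Qed.

Lemma sum_diff (L1 L2 : seq mon) (F : mon -> K) c : 0 < c ->
  uniq L1 -> uniq L2 ->
  (forall k, c <= absv (F k) -> (k \in L1) && (k \in L2)) ->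
  absv (\sum_(k <- L1) F k - \sum_(k <- L2) F k) < c.
Proof.
move=> c0 u1 u2 H.
pose F1 k := if c <= absv (F k) then F k else 0.
pose F2 k := if c <= absv (F k) then 0 else F k.
have EF L : \sum_(k <- L) F k = \sum_(k <- L) F1 k + \sum_(k <- L) F2 k.
  rewrite -big_split /=; apply: eq_bigr => k _; rewrite /F1 /F2.
  by case: ifP; rewrite ?addr0 ?add0r.
have E1 : \sum_(k <- L1) F1 k = \sum_(k <- L2) F1 k.
  apply: sum_supp => // k; rewrite /F1; case: ifP => [h _|]; rewrite ?eqxx //;
  by case/andP: (H _ h).
have B L : absv (\sum_(k <- L) F2 k) < c.
  apply: sum_lt => // k _; rewrite /F2; case: ifP => [_|]; first by rewrite abs0.
  by move/negbT; rewrite -ltNge.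
rewrite !EF E1 opprD addrACA addrN add0r.
exact: absB_lt.
Qed.

End Abs.


Definition mon0 : mon := @Mon (fun _ => 0%N) (ex_intro _ 0%N (fun _ _ => erefl)).

Lemma incr_fin (k : mon) (j e : nat) :
  exists N, forall l, (N <= l)%N ->
    (fun l => if l == j then (expo k l + e)%N else expo k l) l = 0%N.
Proof.
case: k => f [N HN] /=; exists (maxn N j.+1) => l Hl.
have hN : (N <= l)%N by apply: leq_trans Hl; apply: leq_maxl.
have hj : (j < l)%N by apply: leq_trans Hl; apply: leq_maxr.
by case: eqP => [E|_]; [subst; rewrite ltnn in hj|rewrite HN].
Qed.

Definition incr (k : mon) (j e : nat) : mon := Mon (incr_fin k j e).

Lemma incr_decr k j e : (e <= expo k j)%N -> incr (decr k j e) j e = k.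
Proof. move=> h; apply: monP => l /=; case: eqP => [->|//]; by rewrite ?eqxx subnK. Qed.

Lemma decr_incr k j e : decr (incr k j e) j e = k.
Proof. apply: monP => l /=; case: eqP => // ->; by rewrite ?eqxx addnK. Qed.

Lemma incr_inj j e : injective (fun k => incr k j e).
Proof. by move=> a b /(congr1 (fun k => decr k j e)); rewrite !decr_incr. Qed.

Lemma expo_incr k j e : expo (incr k j e) j = (expo k j + e)%N.
Proof. by rewrite /= eqxx. Qed.

Section Series2.
Variables (R : realType) (K : fieldType) (absv : K -> R).
Hypothesis habs : nonarch_absval absv.

Definition delta (s : mon) : ser K := fun i => if i == s then 1 else 0.

Lemma Tinf_ext (f g : ser K) : (forall k, f k = g k) -> in_Tinf absv f -> in_Tinf absv g.
Proof. by move=> /funext ->. Qed.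

Lemma le_sum_In (f : ser K) l i : List.In i l -> absv (f i) <= \sum_(k <- l) absv (f k).
Proof.
elim: l => [//|a l IH] /=; rewrite big_cons => -[->|/IH h].
  by rewrite lerDl sumr_ge0 // => k _; by apply: abs_ge0.
by apply: ler_wpDl => //; by apply: abs_ge0.
Qed.

Lemma Tinf_ub (f : ser K) : in_Tinf absv f -> has_ubound (range (fun i => absv (f i))).
Proof.
move=> H; have [l Hl] := H 1 ltr01.
exists (1 + \sum_(k <- l) absv (f k)) => x [i _ <-].
case: (leP 1 (absv (f i))) => h.
  by apply: ler_wpDl => //; apply: le_sum_In; apply: Hl.
apply: le_trans (ltW h) _; rewrite lerDl sumr_ge0 // => k _; by apply: abs_ge0.
Qed.

Lemma coef_le (f : ser K) k : in_Tinf absv f -> absv (f k) <= tnorm absv f.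
Proof. by move=> H; apply: (ub_le_sup (Tinf_ub H)); exists k. Qed.

Lemma tnorm_le (f : ser K) c : (forall k, absv (f k) <= c) -> tnorm absv f <= c.
Proof.
move=> H; apply: ge_sup; first by exists (absv (f mon0)); exists mon0.
by move=> x [i _ <-].
Qed.

Lemma tnorm_ge0 (f : ser K) : in_Tinf absv f -> 0 <= tnorm absv f.
Proof. by move=> H; apply: le_trans (coef_le mon0 H); by apply: abs_ge0. Qed.

Lemma Tinf_add (f g : ser K) : in_Tinf absv f -> in_Tinf absv g ->
  in_Tinf absv (fun k => f k + g k).
Proof.
move=> Hf Hg eps e0; have [l1 H1] := Hf eps e0; have [l2 H2] := Hg eps e0.
exists (l1 ++ l2)%list => i hi; apply: List.in_or_app.
have := le_trans hi (absD habs _ _); rewrite le_max => /orP[h|h].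
  by left; apply: H1. by right; apply: H2.
Qed.

Lemma Tinf_opp (f : ser K) : in_Tinf absv f -> in_Tinf absv (fun k => - f k).
Proof.
move=> Hf eps e0; have [l H] := Hf eps e0; exists l => i; rewrite absN //; exact: H.
Qed.

Lemma Tinf_sub (f g : ser K) : in_Tinf absv f -> in_Tinf absv g ->
  in_Tinf absv (fun k => f k - g k).
Proof. by move=> Hf Hg; apply: Tinf_add => //; apply: Tinf_opp. Qed.

Lemma Tinf_zero : in_Tinf absv (fun _ => 0).
Proof. move=> eps e0; exists [::] => i; rewrite abs0 // => h; exfalso.
by have := lt_le_trans e0 h; rewrite ltxx. Qed.

Lemma Tinf_scale a (f : ser K) : in_Tinf absv f -> in_Tinf absv (fun k => a * f k).
Proof.
move=> Hf; have [->|a0] := eqVneq a 0.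
  by apply: (Tinf_ext _ Tinf_zero) => k; rewrite mul0r.
have pa : 0 < absv a.
  rewrite lt_neqAle abs_ge0 // andbT; apply/eqP => /esym /(abs_eq0 habs) h.
  by rewrite h eqxx in a0.
move=> eps e0; have pe : 0 < (absv a)^-1 * eps by apply: mulr_gt0 => //; rewrite invr_gt0.
have [l H] := Hf _ pe.
exists l => i; rewrite absM // => h; apply: H; by rewrite ler_pdivrMl.
Qed.

Lemma Tinf_delta s : in_Tinf absv (delta s).
Proof.
move=> eps e0; exists [:: s] => i; rewrite /delta; case: eqP => [->|_]; first by left.
by rewrite abs0 // => h; have := lt_le_trans e0 h; rewrite ltxx.
Qed.

Lemma Tinf_mulX j e (h : ser K) : in_Tinf absv h -> in_Tinf absv (mulXpow j e h).
Proof.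
move=> Hh eps e0; have [l H] := Hh eps e0.
exists (map (fun s => incr s j e) l) => k; rewrite /mulXpow; case: ifP => hk.
  move=> /H /InP hl; apply/InP; rewrite -(incr_decr hk); exact: map_f.
by rewrite abs0 // => h'; have := lt_le_trans e0 h'; rewrite ltxx.
Qed.

Lemma Tinf_gen q j (h : ser K) : in_Tinf absv h -> in_Tinf absv (gen_term q j h).
Proof. by move=> Hh; apply: Tinf_sub; apply: Tinf_mulX. Qed.

Lemma Tinf_gensum q (l : seq (nat * ser K)) : (forall p, List.In p l -> in_Tinf absv p.2) ->
  in_Tinf absv (fun k => \sum_(p <- l) gen_term q p.1 p.2 k).
Proof.
elim: l => [_|a l IH H].
  by apply: (Tinf_ext _ Tinf_zero) => k; rewrite big_nil.
apply: (@Tinf_ext (fun k => gen_term q a.1 a.2 k + \sum_(p <- l) gen_term q p.1 p.2 k)).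
  by move=> k; rewrite big_cons.
apply: Tinf_add; first by apply: Tinf_gen; apply: H; left.
by apply: IH => p hp; apply: H; right.
Qed.

Lemma gen_Tinf q g : in_gen_ideal absv q g -> in_Tinf absv g.
Proof. by case=> l [Hl ->]; apply: Tinf_gensum. Qed.

Lemma gen_ext q (f g : ser K) : (forall k, f k = g k) -> in_gen_ideal absv q f -> in_gen_ideal absv q g.
Proof. by move=> /funext ->. Qed.

Lemma gen_zero q : in_gen_ideal absv q (fun _ => 0).
Proof. exists [::]; split => //; by apply: funext => k; rewrite big_nil. Qed.

Lemma gen_add q f g : in_gen_ideal absv q f -> in_gen_ideal absv q g ->
  in_gen_ideal absv q (fun k => f k + g k).
Proof.
case=> l1 [H1 ->] [l2 [H2 ->]]; exists (l1 ++ l2); split.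
  by move=> p hp; case: (List.in_app_or _ _ _ hp) => [/H1|/H2].
by apply: funext => k; rewrite big_cat.
Qed.

Lemma mulX_scale j e a (h : ser K) k :
  mulXpow j e (fun s => a * h s) k = a * mulXpow j e h k.
Proof. by rewrite /mulXpow; case: ifP; rewrite ?mulr0. Qed.

Lemma gen_scale q a f : in_gen_ideal absv q f -> in_gen_ideal absv q (fun k => a * f k).
Proof.
case=> l [H ->]; exists (map (fun p => (p.1, fun s => a * p.2 s)) l); split.
  move=> p /InP /mapP [p' /InP hp' ->] /=; apply: Tinf_scale; exact: H.
apply: funext => k; rewrite big_map mulr_sumr; apply: eq_bigr => p _.
by rewrite /gen_term /= !mulX_scale mulrBr.
Qed.

Lemma gen_opp q f : in_gen_ideal absv q f -> in_gen_ideal absv q (fun k => - f k).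
Proof. by move/(gen_scale (-1)); apply: gen_ext => k; rewrite mulN1r. Qed.

Lemma Iq_add q u1 u2 : in_Iq absv q u1 -> in_Iq absv q u2 ->
  in_Iq absv q (fun k => u1 k + u2 k).
Proof.
case=> T1 A1 [T2 A2]; split; first exact: Tinf_add.
move=> eps e0; have [G1 [HG1 N1]] := A1 eps e0; have [G2 [HG2 N2]] := A2 eps e0.
exists (fun k => G1 k + G2 k); split; first exact: gen_add.
apply: le_lt_trans (tnorm_le (c := Num.max (tnorm absv (fun k => u1 k - G1 k))
                                            (tnorm absv (fun k => u2 k - G2 k))) _) _.
  move=> k; have -> : u1 k + u2 k - (G1 k + G2 k) = (u1 k - G1 k) + (u2 k - G2 k) by ring.
  have t1 : in_Tinf absv (fun k => u1 k - G1 k) by apply: Tinf_sub => //; exact: (gen_Tinf HG1).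
  have t2 : in_Tinf absv (fun k => u2 k - G2 k) by apply: Tinf_sub => //; exact: (gen_Tinf HG2).
  apply: le_trans (absD habs _ _) _; rewrite ge_max !le_max.
  by rewrite (coef_le k t1) (coef_le k t2) orbT.
by rewrite gt_max N1 N2.
Qed.

Lemma Iq_opp q u : in_Iq absv q u -> in_Iq absv q (fun k => - u k).
Proof.
case=> T A; split; first exact: Tinf_opp.
move=> eps e0; have [G [HG N]] := A eps e0.
exists (fun k => - G k); split; first exact: gen_opp.
apply: le_lt_trans (tnorm_le (c := tnorm absv (fun k => u k - G k)) _) N.
move=> k; rewrite -opprD absN //; apply: coef_le; apply: Tinf_sub => //; exact: gen_Tinf HG.
Qed.

Lemma Iq_sub q u1 u2 : in_Iq absv q u1 -> in_Iq absv q u2 ->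
  in_Iq absv q (fun k => u1 k - u2 k).
Proof. by move=> H1 H2; apply: Iq_add => //; apply: Iq_opp. Qed.

Lemma Iq_ext q (f g : ser K) : (forall k, f k = g k) -> in_Iq absv q f -> in_Iq absv q g.
Proof. by move=> /funext ->. Qed.

End Series2.


Section Red.
Variable q : nat.
Hypothesis hq : (2 <= q)%N.

Definition redn (e : nat) : nat := if e == 0%N then 0%N else ((e.-1) %% q.-1).+1.

Lemma redn0 : redn 0 = 0%N. Proof. by []. Qed.

Lemma redn_le e : (redn e <= q.-1)%N.
Proof.
rewrite /redn; case: eqP => // _; rewrite ltn_pmod //; move: hq; lia.
Qed.

Lemma redn_id e : (e <= q.-1)%N -> redn e = e.
Proof.
rewrite /redn; case: e => [//|e] /= h; rewrite modn_small //.
Qed.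

Lemma redn_shift e : redn (e + q) = redn (e + 1).
Proof.
rewrite /redn addn_eq0 addn1 /=.
have -> : (e + q).-1 = (e + q.-1)%N by move: hq; lia.
have -> : (q == 0%N) = false by apply/eqP; move: hq; lia.
by rewrite andbF modnDr.
Qed.

Lemma redn_step e : (q <= e)%N -> redn (e - q.-1) = redn e.
Proof.
move=> h; rewrite /redn.
have h1 : (e - q.-1 != 0)%N by apply/eqP; move: hq h; lia.
have h2 : (e != 0)%N by apply/eqP; move: hq h; lia.
rewrite (negbTE h1) (negbTE h2).
have -> : e.-1 = ((e - q.-1).-1 + q.-1)%N.
  move: hq h; lia.
by rewrite modnDr.
Qed.

Lemma red_fin (k : mon) :
  exists N, forall l, (N <= l)%N -> (fun l => redn (expo k l)) l = 0%N.
Proof. case: k => f [N HN] /=; exists N => l hl; by rewrite HN. Qed.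

Definition red (k : mon) : mon := Mon (red_fin k).

Lemma red_id k : (forall j, (expo k j <= q.-1)%N) -> red k = k.
Proof. move=> h; apply: monP => l /=; exact: redn_id. Qed.

Lemma red_idem k : red (red k) = red k.
Proof. apply: red_id => j /=; exact: redn_le. Qed.

Lemma red_shift s j : red (incr s j q) = red (incr s j 1).
Proof. apply: monP => l /=; case: eqP => // _; exact: redn_shift. Qed.

Lemma red_step k j : (q <= expo k j)%N -> red (incr (decr k j q) j 1) = red k.
Proof.
move=> h; apply: monP => l /=; case: eqP => [->|//].
rewrite -(redn_step h) ?eqxx; congr redn; move: hq h; lia.
Qed.

Lemma expo_step k j : (q <= expo k j)%N -> expo (incr (decr k j q) j 1) j = (expo k j - q.-1)%N.
Proof. move=> h /=; rewrite eqxx; move: hq h; lia. Qed.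

Lemma expo_step_ne k j l : l != j -> expo (incr (decr k j q) j 1) l = expo k l.
Proof. by move=> /negbTE h /=; rewrite h. Qed.

Variables (R : realType) (K : fieldType) (absv : K -> R).
Hypothesis habs : nonarch_absval absv.

Lemma mulX_delta j e s k : mulXpow j e (delta K s) k = delta K (incr s j e) k.
Proof.
rewrite /mulXpow /delta; case: ifP => h.
  case: (eqVneq k (incr s j e)) => [->|ne]; first by rewrite decr_incr eqxx.
  case: eqP => // E; exfalso; move/eqP: ne; apply; by rewrite -E incr_decr.
case: eqP => // E; move: h; by rewrite E expo_incr leq_addl.
Qed.

Definition mono_red_P (k : mon) : Prop :=
  exists lp : seq (nat * ser K), (forall p, List.In p lp -> in_Tinf absv p.2) /\
    forall m, \sum_(p <- lp) gen_term q p.1 p.2 m = delta K k m - delta K (red k) m.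

Lemma mono_red k : mono_red_P k.
Proof.
suff C : forall n k, (forall l, (n <= l)%N -> (expo k l <= q.-1)%N) -> mono_red_P k.
  case: (expo_fin k) => N HN; apply: (C N) => l /HN ->; by [].
elim=> [|n IHn] {}k hk.
  rewrite /mono_red_P red_id; last by move=> j; apply: hk.
  by exists [::]; split => // m; rewrite big_nil subrr.
suff C2 : forall e k, (expo k n <= e)%N -> (forall l, (n < l)%N -> (expo k l <= q.-1)%N) ->
  mono_red_P k by apply: (C2 _ k (leqnn _)).
elim=> [|e IHe] {hk}k he hl.
  apply: IHn => l; rewrite leq_eqVlt => /orP[/eqP <-|]; last exact: hl.
  by apply: leq_trans he _.
case: (leqP (expo k n) q.-1) => h.
  apply: IHn => l; rewrite leq_eqVlt => /orP[/eqP <-|] //; exact: hl.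
have hqn : (q <= expo k n)%N by move: hq h; lia.
set k' := incr (decr k n q) n 1.
have [lp [Hlp E]] : mono_red_P k'.
  apply: IHe.
    rewrite /k' expo_step //; move: hq h he; lia.
  move=> l hnl; rewrite /k' expo_step_ne; first exact: hl.
  by rewrite neq_ltn hnl orbT.
exists ((n, delta K (decr k n q)) :: lp); split.
  move=> p [<-|]; [exact: Tinf_delta|exact: Hlp].
move=> m; rewrite big_cons E /gen_term /= !mulX_delta incr_decr // red_step //.
rewrite -/k'; ring.
Qed.

Lemma fiber_mulX j e (h : ser K) (S L : seq mon) (P : pred mon) :
  uniq S -> uniq L -> (forall s, h s != 0 -> s \in S) ->
  (forall s, s \in S -> incr s j e \in L) ->
  \sum_(k <- L | P k) mulXpow j e h k = \sum_(s <- S | P (incr s j e)) h s.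
Proof.
move=> uS uL hS hL.
rewrite big_mkcond [RHS]big_mkcond.
rewrite (@sum_supp _ L (map (fun s => incr s j e) S)) //.
- rewrite big_map; apply: eq_bigr => s _; rewrite /mulXpow expo_incr leq_addl decr_incr //.
- by rewrite map_inj_uniq //; apply: incr_inj.
- move=> k; case: (P k); last by rewrite eqxx.
  rewrite /mulXpow; case: ifP => [hk hh|]; last by rewrite eqxx.
  by rewrite -(incr_decr hk); apply: hL; apply: hS.
- move=> k; case: (P k); last by rewrite eqxx.
  rewrite /mulXpow; case: ifP => [hk hh|]; last by rewrite eqxx.
  by rewrite -(incr_decr hk); apply: map_f; apply: hS.
Qed.

Lemma fiber_gen j (h : ser K) (S L : seq mon) m :
  uniq S -> uniq L -> (forall s, h s != 0 -> s \in S) ->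
  (forall s, s \in S -> incr s j q \in L) -> (forall s, s \in S -> incr s j 1 \in L) ->
  \sum_(k <- L | red k == m) gen_term q j h k = 0.
Proof.
move=> uS uL hS h1 h2; rewrite /gen_term sumrB (fiber_mulX (fun k => red k == m) uS uL hS h1).
rewrite (fiber_mulX (fun k => red k == m) uS uL hS h2).
rewrite (eq_bigl (fun s => red (incr s j 1) == m)) ?subrr // => s; by rewrite red_shift.
Qed.

Lemma mulX_diff j e (h : ser K) eps k : 0 < eps ->
  absv (mulXpow j e h k - mulXpow j e (fun s => if eps <= absv (h s) then h s else 0) k) < eps.
Proof.
move=> e0; rewrite /mulXpow; case: ifP => _; last by rewrite subrr abs0.
case: ifP => [_|/negbT]; first by rewrite subrr abs0.
by rewrite -ltNge subr0.
Qed.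

Lemma approx_poly (lp : seq (nat * ser K)) eps : 0 < eps ->
  (forall p, List.In p lp -> in_Tinf absv p.2) ->
  exists G' : ser K, exists L : seq mon,
   (forall k, absv (\sum_(p <- lp) gen_term q p.1 p.2 k - G' k) < eps) /\
   (forall L', uniq L' -> {subset L <= L'} -> forall m, \sum_(k <- L' | red k == m) G' k = 0).
Proof.
move=> e0; elim: lp => [|[j h] lp IH] H.
  exists (fun _ => 0), [::]; split.
    by move=> k; rewrite big_nil subr0 abs0.
  by move=> L' _ _ m; rewrite big1.
have [G0 [L0 [A0 B0]]] := IH (fun p hp => H p (or_intror hp)).
have [l Hl] := H (j, h) (or_introl erefl) eps e0.
pose S := undup l.
pose h' s := if eps <= absv (h s) then h s else 0.
exists (fun k => gen_term q j h' k + G0 k).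
exists (map (fun s => incr s j q) S ++ map (fun s => incr s j 1) S ++ L0); split.
  move=> k; rewrite big_cons /=.
  have -> : gen_term q j h k + \sum_(p <- lp) gen_term q p.1 p.2 k - (gen_term q j h' k + G0 k)
    = ((mulXpow j q h k - mulXpow j q h' k) - (mulXpow j 1 h k - mulXpow j 1 h' k))
      + (\sum_(p <- lp) gen_term q p.1 p.2 k - G0 k) by rewrite /gen_term; ring.
  apply: absD_lt => //; apply: absB_lt => //; exact: mulX_diff.
move=> L' uL sub m; rewrite big_split /= (B0 L' uL) ?addr0; last first.
  by move=> x hx; apply: sub; rewrite !mem_cat hx !orbT.
apply: (fiber_gen (S := S)) => //.
- exact: undup_uniq.
- move=> s; rewrite /h'; case: ifP => [hs _|]; last by rewrite eqxx.
  by rewrite mem_undup; apply/InP; apply: Hl.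
- move=> s hs; apply: sub; rewrite mem_cat; apply/orP; left; exact: (map_f (fun s => incr s j q)).
- move=> s hs; apply: sub; rewrite !mem_cat; apply/orP; right; apply/orP; left.
  exact: (map_f (fun s => incr s j 1)).
Qed.

Lemma core (g u : ser K) : in_Tinf absv g -> q_simplified q g -> in_Iq absv q u ->
  tnorm absv g <= tnorm absv (fun k => g k + u k).
Proof.
move=> Tg Sg [Tu Au].
have Tgu : in_Tinf absv (fun k => g k + u k) by apply: Tinf_add.
apply: tnorm_le => m; case: (leP (absv (g m)) (tnorm absv (fun k => g k + u k))) => // hN.
exfalso.
have e0 : 0 < absv (g m) by apply: le_lt_trans hN; apply: tnorm_ge0.
have gm0 : g m != 0 by apply/eqP => E; move: e0; rewrite E abs0 // ltxx.
have redm : red m = m by apply: red_id; apply: Sg.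
have [G [[lp [Hlp EG]] NG]] := Au _ e0.
have TuG : in_Tinf absv (fun k => u k - G k).
  by apply: Tinf_sub => //; rewrite EG; apply: Tinf_gensum.
have cG k : absv (u k - G k) < absv (g m) by apply: le_lt_trans NG; apply: coef_le.
have [G' [L [A B]]] := approx_poly e0 Hlp.
have cG' k : absv (u k - G' k) < absv (g m).
  have -> : u k - G' k = (u k - G k) + (G k - G' k) by ring.
  apply: absD_lt => //; rewrite EG; exact: A.
pose L' := undup (m :: L).
have uL' : uniq L' by apply: undup_uniq.
have sub : {subset L <= L'} by move=> x hx; rewrite mem_undup in_cons hx orbT.
have supp k : (if red k == m then g k else 0) != 0 -> k = m.
  case: (eqVneq (red k) m) => [E|ne]; last by rewrite eqxx.
  move=> gk; have rk : red k = k by apply: red_id; apply: Sg.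
  by rewrite -rk.
have H1 : \sum_(k <- L' | red k == m) g k = g m.
  rewrite big_mkcond (@sum_supp _ L' [:: m]) //.
  - by rewrite big_seq1 redm eqxx.
  - by move=> k /supp ->; rewrite mem_undup mem_head.
  - by move=> k /supp ->; rewrite mem_head.
have H2 := B L' uL' sub m.
have H3 : absv (\sum_(k <- L' | red k == m) (u k - G' k)) < absv (g m).
  by apply: (sum_lt habs) => // k _; apply: cG'.
have H4 : absv (\sum_(k <- L' | red k == m) (g k + u k)) < absv (g m).
  apply: le_lt_trans hN; apply: (sum_le habs); first exact: tnorm_ge0.
  by move=> k _; apply: coef_le.
have E : g m = \sum_(k <- L' | red k == m) (g k + u k)
            - \sum_(k <- L' | red k == m) (u k - G' k) - \sum_(k <- L' | red k == m) G' k.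
  rewrite -H1 -!sumrB; apply: eq_bigr => k _; ring.
rewrite H2 subr0 in E; have := absB_lt habs H4 H3; by rewrite -E ltxx.
Qed.

End Red.


Section Final.
Variables (R : realType) (K : fieldType) (absv : K -> R).
Hypothesis habs : nonarch_absval absv.
Variable q : nat.
Hypothesis hq : (2 <= q)%N.

Lemma gen_comb (f : ser K) S :
  in_gen_ideal absv q (fun m => \sum_(k <- S) f k * (delta K k m - delta K (red q k) m)).
Proof.
elim: S => [|a S IH].
  by apply: (gen_ext _ (gen_zero absv q)) => m; rewrite big_nil.
have H1 : in_gen_ideal absv q (fun m => delta K a m - delta K (red q a) m).
  have [lp [Hlp E]] := mono_red hq habs a.
  by exists lp; split => //; apply: funext => m; rewrite E.
apply: (gen_ext _ (gen_add (gen_scale habs (f a) H1) IH)) => m.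
by rewrite big_cons.
Qed.

Lemma sum_delta (f : ser K) S m : uniq S ->
  \sum_(k <- S) f k * delta K k m = if m \in S then f m else 0.
Proof.
elim: S => [_|a S IH /andP[na uS]]; first by rewrite big_nil.
rewrite big_cons in_cons IH // /delta; case: (eqVneq m a) => [->|ne] /=.
  by rewrite (negbTE na) mulr1 addr0.
by rewrite mulr0 add0r.
Qed.

Lemma inv_le (n N : nat) : (N <= n)%N -> (n.+1%:R : R)^-1 <= (N.+1%:R)^-1.
Proof.
move=> h; rewrite lef_pV2 ?posrE ?ltr0Sn // ler_nat; by rewrite ltnS.
Qed.

Lemma existence (f : ser K) : complete_absval absv -> in_Tinf absv f ->
  exists g : ser K, [/\ in_Tinf absv g, q_simplified q g & in_Iq absv q (fun k => f k - g k)].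
Proof.
move=> hcomp Tf.
have pos (n : nat) : (0 : R) < (n.+1%:R)^-1 by rewrite invr_gt0 ltr0Sn.
have [Lf HLf] := @choice nat (seq mon) (fun (n : nat) (l : seq mon) =>
   forall i, (n.+1%:R : R)^-1 <= absv (f i) -> List.In i l)
  (fun n => Tf _ (pos n)).
pose u m n := \sum_(k <- undup (Lf n) | red q k == m) f k.
pose F m k := if red q k == m then f k else 0.
have uE m L : \sum_(k <- L | red q k == m) f k = \sum_(k <- L) F m k by rewrite big_mkcond.
have FE m c k : 0 < c -> c <= absv (F m k) -> c <= absv (f k).
  rewrite /F; case: ifP => // _ c0; rewrite abs0 // => h.
  by have := lt_le_trans c0 h; rewrite ltxx.
have Hlim : forall m, exists l, forall eps, 0 < eps -> exists N, forall n, (N <= n)%N ->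
    absv (u m n - l) < eps.
  move=> m; apply: hcomp => eps e0.
  have [N hN] := ltr_add_invr e0; rewrite add0r in hN.
  have c0 : (0 : R) < (N.+1%:R)^-1 by rewrite invr_gt0 ltr0Sn.
  exists N => n1 n2 h1 h2; rewrite /u !uE.
  apply: lt_trans hN; apply: (sum_diff habs c0); rewrite ?undup_uniq //.
  move=> k /(FE _ _ _ c0) hk; rewrite !mem_undup; apply/andP; split; apply/InP; apply: HLf.
    exact: le_trans (inv_le h1) hk.
  exact: le_trans (inv_le h2) hk.
have [rho Hrho] := choice Hlim.
have close m c L : 0 < c -> uniq L -> (forall k, c <= absv (f k) -> k \in L) ->
    absv (\sum_(k <- L | red q k == m) f k - rho m) < c.
  move=> c0 uL hL.
  have [N1 HN1] := Hrho m c c0.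
  have [N2 hN2] := ltr_add_invr c0; rewrite add0r in hN2.
  pose n := maxn N1 N2.
  have A : absv (\sum_(k <- L | red q k == m) f k - u m n) < c.
    rewrite /u !uE; apply: (sum_diff habs c0); rewrite ?undup_uniq //.
    move=> k /(FE _ _ _ c0) hk; rewrite hL //= mem_undup; apply/InP; apply: HLf.
    apply: le_trans (ltW (le_lt_trans _ hN2)) hk; apply: inv_le; exact: leq_maxr.
  have B := HN1 n (leq_maxl _ _).
  have -> : \sum_(k <- L | red q k == m) f k - rho m =
     (\sum_(k <- L | red q k == m) f k - u m n) + (u m n - rho m) by ring.
  exact: absD_lt.
pose g m := if red q m == m then rho m else 0.
have Tg : in_Tinf absv g.
  move=> eps e0; have [l Hl] := Tf eps e0.
  exists (map (red q) l) => m; rewrite /g; case: ifP => [/eqP rm hm|]; last first.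
    by move=> _; rewrite abs0 // => h; have := lt_le_trans e0 h; rewrite ltxx.
  have [[k [hk1 hk2]]|nok] := pselect (exists k, red q k = m /\ eps <= absv (f k)).
    by apply/InP; rewrite -hk1; apply: map_f; apply/InP; apply: Hl.
  exfalso.
  have C := close m eps (undup l) e0 (undup_uniq _)
     (fun k hk => ltac:(by rewrite mem_undup; apply/InP; apply: Hl)).
  have S : absv (\sum_(k <- undup l | red q k == m) f k) < eps.
    apply: (sum_lt habs) => // k /eqP hk; rewrite ltNge; apply/negP => hk2.
    by apply: nok; exists k.
  have := absB_lt habs S C; rewrite opprB addrC subrK => h.
  by have := le_lt_trans hm h; rewrite ltxx.
have Sg : q_simplified q g.
  move=> i; rewrite /g; case: ifP => [/eqP ri _ j|]; last by rewrite eqxx.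
  rewrite -ri /=; exact: redn_le.
exists g; split => //.
split; first by apply: Tinf_sub.
move=> eps e0.
have c0 : 0 < eps / 2 by lra.
have ce : eps / 2 < eps by lra.
have [l Hl] := Tf _ c0.
pose S := undup l.
exists (fun m => \sum_(k <- S) f k * (delta K k m - delta K (red q k) m)); split.
  exact: gen_comb.
apply: le_lt_trans ce; apply: tnorm_le => m; apply: ltW.
have GE : \sum_(k <- S) f k * (delta K k m - delta K (red q k) m)
   = (if m \in S then f m else 0) - \sum_(k <- S | red q k == m) f k.
  have B : \sum_(k <- S | red q k == m) f k = \sum_(k <- S) (if red q k == m then f k else 0).
    by rewrite big_mkcond.
  rewrite -(sum_delta f m (undup_uniq l)) B -sumrB; apply: eq_bigr => k _.
  rewrite mulrBr; congr (_ - _); rewrite /delta eq_sym; case: ifP => _.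
    by rewrite mulr1. by rewrite mulr0.
rewrite GE.
have -> : f m - g m - ((if m \in S then f m else 0) - \sum_(k <- S | red q k == m) f k)
  = (f m - (if m \in S then f m else 0)) + (\sum_(k <- S | red q k == m) f k - g m) by ring.
apply: absD_lt => //.
  case: ifP => hm; first by rewrite subrr abs0.
  rewrite subr0 ltNge; apply/negP => h; move: hm; rewrite mem_undup.
  by have /InP -> := Hl m h.
rewrite /g; case: ifP => [/eqP rm|/negbT nm].
  apply: close => //; first exact: undup_uniq.
  by move=> k hk; rewrite mem_undup; apply/InP; apply: Hl.
rewrite big1 ?subr0 ?abs0 //.
move=> k /eqP hk; exfalso; move: nm; by rewrite -hk red_idem ?eqxx.
Qed.

End Final.


Unset Implicit Arguments.
Set Strict Implicit.

Theorem lemma6p1 (R : realType) (K : fieldType) (absv : K -> R) (q : nat) :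
  is_local_field absv q ->
  (forall f : ser K, in_Tinf absv f ->
     exists! g : ser K,
       [/\ in_Tinf absv g, q_simplified q g & in_Iq absv q (fun k => f k - g k)]) /\
  (forall f g : ser K, in_Tinf absv f -> in_Tinf absv g -> q_simplified q g ->
     in_Iq absv q (fun k => f k - g k) ->
     res_norm absv q f = tnorm absv g).
Proof.
case=> habs _ hcomp [s [hs _ hdist hcov]].
have hq : (2 <= q)%N.
  have [i0 hi0 h0] := hcov 0 (ltac:(by rewrite abs0 // lexx)).
  have [i1 hi1 h1] := hcov 1 (ltac:(by rewrite abs1 // lexx)).
  have ne : i0 <> i1.
    move=> E; subst i1.
    have : absv ((1 - nth 0 s i0) - (0 - nth 0 s i0)) < 1 by apply: absB_lt.
    by rewrite opprB addrA subrK subr0 abs1 // ltxx.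
  move: hi0 hi1 ne; lia.
split.
- move=> f Tf; have [g [Tg Sg Ig]] := existence habs hq hcomp Tf.
  exists g; split => // g' [Tg' Sg' Ig']; apply: funext => k.
  pose d := fun k => g k - g' k.
  have Td : in_Tinf absv d by apply: Tinf_sub.
  have Sd : q_simplified q d.
    move=> i hi; case: (eqVneq (g i) 0) => gi; last exact: Sg.
    apply: Sg'; apply/eqP => g'i; move: hi; by rewrite /d gi g'i subrr eqxx.
  have Iu : in_Iq absv q (fun k => g' k - g k).
    apply: (Iq_ext _ (Iq_sub habs Ig Ig')) => k'; ring.
  have C := core hq habs Td Sd Iu.
  have Z : tnorm absv (fun k => d k + (g' k - g k)) <= 0.
    apply: tnorm_le => k'; rewrite /d.
    have -> : g k' - g' k' + (g' k' - g k') = 0 by ring.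
    by rewrite abs0.
  have h := le_trans (coef_le habs k Td) (le_trans C Z).
  have : absv (d k) = 0 by apply/le_anti; rewrite h abs_ge0.
  by move/(abs_eq0 habs)/eqP; rewrite subr_eq0 => /eqP.
- move=> f g Tf Tg Sg Ifg; rewrite /res_norm.
  set E := (X in inf X).
  have Igf : in_Iq absv q (fun k => g k - f k).
    by apply: (Iq_ext _ (Iq_opp habs Ifg)) => k; rewrite opprB.
  have mem : E (tnorm absv g).
    exists (fun k => g k - f k) => //; congr tnorm; apply: funext => k; ring.
  have lb : lbound E (tnorm absv g).
    move=> y [h hh <-].
    have := core hq habs Tg Sg (Iq_add habs Ifg hh).
    have -> : (fun k => g k + (f k - g k + h k)) = (fun k => f k + h k).
      by apply: funext => k; ring.
    by [].
  apply/le_anti/andP; split.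
    by apply: (ge_inf (ex_intro _ _ lb)).
  apply: lb_le_inf => //; by exists (tnorm absv g).
Qed.
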